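(* Let $\mathsf P$ be a network coding problem. A rate-capacity tuple $(\lambda,\omega)$ is $0$-achievable subject to the generalised routing constraint if and only if \[(\lambda,\omega)\in\mathsf{CL}\big(\mathrm{proj}^*_{\mathsf P}[\Gamma_{AA}\cap\mathcal C_T(\mathsf P)\cap\mathcal C_I(\mathsf P)]\big),\] where for $h\in\mathcal H[\mathcal S\cup\mathcal E]$, $\mathrm{proj}^*_{\mathsf P}[h]$ is the tuple with $\mathrm{proj}^*_{\mathsf P}[h](s)=\min_{u\in D(s)}h(s\wedge\mathrm{in}(u))$ for $s\in\mathcal S$ and $\mathrm{proj}^*_{\mathsf P}[h](e)=h(e)$ for $e\in\mathcal E$.
   Context: A network is $\mathsf G=(\mathcal V,\mathcal E)$, $\mathcal V$ a finite set of nodes, $\mathcal E$ a finite set of hyperedges, each $e$ with tail $\mathrm{tail}(e)\in\mathcal V$ and head $\mathrm{head}(e)\subseteq\mathcal V$, without directed cycles. A connection constraint $\mathsf M=(\mathcal S,O,D)$: finite source index set $\mathcal S$, $O:\mathcal S\to2^{\mathcal V}$ (where source $s$ is available), $D:\mathcal S\to2^{\mathcal V}$ (sinks of $s$). $\mathsf P=(\mathsf G,\mathsf M)$. Sources are imaginary edges with $\mathrm{head}(s)=O(s)$; $\mathrm{in}(e)=\{f\in\mathcal S\cup\mathcal E:\mathrm{tail}(e)\in\mathrm{head}(f)\}$ for $e\in\mathcal E$, $\mathrm{in}(u)=\{f\in\mathcal S\cup\mathcal E:u\in\mathrm{head}(f)\}$ for $u\in\mathcal V$. A rate-capacity tuple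 is $(\lambda,\omega)$, $\lambda:\mathcal S\to\mathbb R_{\ge0}$, $\omega:\mathcal E\to\mathbb R_{\ge0}$. A routing subnetwork is a subset $\mathcal T\subseteq\mathcal S\cup\mathcal E$ with $|\mathcal T\cap\mathcal S|=1$ (the unique source is $\nu(\mathcal T)$) such that $\mathrm{in}(e)\cap\mathcal T\ne\emptyset$ for every $e\in\mathcal T\cap\mathcal E$. A tuple $(\lambda,\omega)$ is $0$-achievable subject to the generalised routing constraint if there is a (finite) collection of routing subnetworks $\mathcal T_i$ with capacities $c_i\ge0$ such that (R1) $\omega(e)\ge\sum_{i:e\in\mathcal T_i}c_i$ for all $e\in\mathcal E$, and (R2$'$) for every $s\in\mathcal S$ and $u\in D(s)$, $\lambda(s)\le\sum_{i:\ \mathrm{in}(u)\cap\mathcal T_i\ne\emptyset,\ \nu(\mathcal T_i)=s}c_i$. $\mathcal H[\mathcal S\cup\mathcal E]$ is the set of real functions on subsets of $\mathcal S\cup\mathcal E$; $g(\alpha\mid\beta)=g(\alpha\cup\beta)-g(\beta)$, $g(\alpha\wedge\beta)=g(\alpha)+g(\beta)-g(\alpha\cup\beta)$. A function $h$ is atomic if there is $\mathcal T\subseteq\mathcal S\cup\mathcal E$ with $h(\beta)=1$ when $\beta\cap\mathcal T\ne\emptyset$ and $0$ otherwise; almost atomic if it is a finite nonnegative combination of atomic functions; $\Gamma_{AA}$ is the set of almost atomic functions. $\mathcal C_I(\mathsf P)=\{h:h(\mathcal S)=\sum_sh(s)\}$, $\mathcal C_T(\mathsf P)=\{h:h(e\mid\mathrm{in}(e))=0\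 \forall e\in\mathcal E\}$. Operators are applied elementwise to sets. For a set $\mathcal R$ of tuples, $\mathsf{CL}(\mathcal R)$ is the set of $(\lambda,\omega)$ such that there exist $(\lambda^n,\omega^n)\in\mathcal R$ and $c_n>0$ with $\lim_nc_n\omega^n(e)\le\omega(e)$ and $\lim_nc_n\lambda^n(s)\ge\lambda(s)$ for all $e,s$. *)

(* Defs.v *)
From HB Require Import structures.
From mathcomp Require Import all_boot all_order all_algebra.
From mathcomp Require Import all_classical all_reals all_analysis.
Set Implicit Arguments. Unset Strict Implicit. Unset Printing Implicit Defensive.
Import Order.TTheory GRing.Theory Num.Theory.
Import numFieldNormedType.Exports.

Local Open Scope classical_set_scope.
Local Open Scope ring_scope.

Record problem (V E S : finType) := Problem {
  tail : E -> V;
  head : E -> {set V};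
  O : S -> {set V};      (* where source s is available *)
  D : S -> {set V}       (* sinks of source s *)
}.

Section Defs.
Variables (V E S : finType) (P : problem V E S).

Definition acyclic : Prop :=
  forall (e : E) (s : seq E),
    ~~ cycle [rel e1 e2 | tail P e2 \in head P e1] (e :: s).

(* sources are imaginary edges with head(s) = O(s) *)
Definition headf (f : S + E) : {set V} :=
  match f with inl s => O P s | inr e => head P e end.

Definition in_edge (e : E) : {set S + E} := finset (fun f => tail P e \in headf f).
Definition in_node (u : V) : {set S + E} := finset (fun f => u \in headf f).

Definition all_sources : {set S + E} := finset (fun f : S + E => if f is inl _ then true else false).

Definition nu (T : {set S + E}) : option S := [pick s | inl s \in T].

Definition routing_subnetwork (T : {set S + E}) : Prop :=
  #|finset (fun s => inl s \in T)| = 1%N /\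
  forall e : E, inr e \in T -> in_edge e :&: T != finset.set0.

Definition zero_achievable_routing (R : realType)
    (lam : S -> R) (om : E -> R) : Prop :=
  exists (n : nat) (T : 'I_n -> {set S + E}) (c : 'I_n -> R),
    (forall i, routing_subnetwork (T i)) /\ (forall i, 0 <= c i) /\
    (forall e : E, \sum_(i | inr e \in T i) c i <= om e) /\
    (forall (s : S) (u : V), u \in D P s ->
       lam s <= \sum_(i | (in_node u :&: T i != finset.set0) && (nu (T i) == Some s)) c i).

Definition hfun (R : realType) := {set S + E} -> R.

Definition hcond (R : realType) (g : hfun R) (a b : {set S + E}) : R :=
  g (a :|: b) - g b.
Definition hmeet (R : realType) (g : hfun R) (a b : {set S + E}) : R :=
  g a + g b - g (a :|: b).

Definition atom (R : realType) (T : {set S + E}) : hfun R :=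
  fun b => if b :&: T != finset.set0 then 1 else 0.

Definition atomic (R : realType) (h : hfun R) : Prop :=
  exists T : {set S + E}, forall b, h b = atom R T b.

Definition almost_atomic (R : realType) (h : hfun R) : Prop :=
  exists (n : nat) (c : 'I_n -> R) (g : 'I_n -> hfun R),
    (forall i, 0 <= c i) /\ (forall i, atomic (g i)) /\
    (forall b, h b = \sum_i c i * g i b).

Definition C_I (R : realType) (h : hfun R) : Prop :=
  h all_sources = \sum_(s : S) h (finset.set1 (inl s)).

Definition C_T (R : realType) (h : hfun R) : Prop :=
  forall e : E, hcond h (finset.set1 (inr e)) (in_edge e) = 0.

(* proj*_P[h](s) = min_{u in D(s)} h(s /\ in(u)), with min over the empty
   set taken to be +oo (hence extended-real valued) *)
Definition proj_src (R : realType) (h : hfun R) (s : S) : \bar R :=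
  \big[Order.min/+oo%E]_(u in D P s) (hmeet h (finset.set1 (inl s)) (in_node u))%:E.

Definition proj_edge (R : realType) (h : hfun R) (e : E) : R := h (finset.set1 (inr e)).

Definition CL (R : realType)
    (Rset : (S -> \bar R) -> (E -> R) -> Prop)
    (lam : S -> R) (om : E -> R) : Prop :=
  exists (lamn : nat -> S -> \bar R) (omn : nat -> E -> R) (c : nat -> R),
    (forall n, Rset (lamn n) (omn n)) /\ (forall n, 0 < c n) /\
    (forall e : E, exists l : R,
        (fun n => c n * omn n e) @ \oo --> l /\ l <= om e) /\
    (forall s : S, exists l : \bar R,
        (fun n => ((c n)%:E * lamn n s)%E) @ \oo --> l /\ ((lam s)%:E <= l)%E).

Definition proj_AA_TI (R : realType) (lam : S -> \bar R) (om : E -> R) : Prop :=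
  exists h : hfun R, almost_atomic h /\ C_T h /\ C_I h /\
    lam = proj_src h /\ om = proj_edge h.

End Defs.

(* Main.v *)
Require Import Defs.
From HB Require Import structures.
From mathcomp Require Import all_boot all_order all_algebra.
From mathcomp Require Import all_classical all_reals all_analysis.
Import Order.TTheory GRing.Theory Num.Theory.
Import numFieldNormedType.Exports.
Local Open Scope ring_scope.
Set Implicit Arguments. Unset Strict Implicit. Unset Printing Implicit Defensive.

Section Clus.
Local Open Scope classical_set_scope.
Lemma cluster_lem (R : realType) (I : finType) (B : R) (y : nat -> I -> R)
  (hy : forall n i, 0 <= y n i <= B) :
  exists p : I -> R, (forall i, 0 <= p i) /\
   forall (Q : pred I) (a : R),
     ((forall eps, 0 < eps -> \forall n \near \oo, \sum_(i | Q i) y n i <= a + eps) ->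
         \sum_(i | Q i) p i <= a) /\
     ((forall eps, 0 < eps -> \forall n \near \oo, a - eps <= \sum_(i | Q i) y n i) ->
         a <= \sum_(i | Q i) p i).
Proof.
pose k := #|I|.
pose v n : 'rV[R]_k := \row_(j < k) y n (enum_val j).
have Aco := @rV_compact R k (fun _ => `[0, B]%classic) (fun _ => @segment_compact R 0 B).
set A := [set v | _] in Aco.
have FA : (v @ \oo) A.
  exists 0%N => // n _ j /=; rewrite mxE in_itv /=; exact: hy.
have [p' [Ap' clp']] := Aco _ _ FA.
have := clp'; rewrite cluster_cvgE /= => -[G PG [Gp FG]].
exists (fun i => p' ord0 (enum_rank i)); split.
  by move=> i; have := Ap' (enum_rank i); rewrite /= in_itv /= => /andP[].
move=> Q a.
pose L (M : 'rV[R]_k) := \sum_(i | Q i) M ord0 (enum_rank i).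
have Lc : continuous L.
  have := @continuous_big R I +%R 0 Q (@pseudometric_normed_Zmodule.add_continuous R R) 'rV[R]_k (index_enum I) (fun i M => M ord0 (enum_rank i)).
  apply.
  by move=> i _; exact: coord_continuous.
have LG : L @ G --> L p' by apply: cvg_trans (cvg_app L Gp) (Lc p').
have Lv n : L (v n) = \sum_(i | Q i) y n i.
  by apply: eq_bigr => i _; rewrite mxE enum_rankK.
split.
- move=> H; apply/ler_addgt0Pr => e e0.
  apply: (@closed_cvg _ _ G _ L [set x | x <= a + e] (@closed_le _ _) _ _ LG).
  apply: FG; have := H e e0; apply: filterS => n /=; by rewrite Lv.
- move=> H; apply/ler_addgt0Pr => e e0; rewrite -lerBlDr.
  apply: (@closed_cvg _ _ G _ L [set x | a - e <= x] (@closed_ge _ _) _ _ LG).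
  apply: FG; have := H e e0; apply: filterS => n /=; by rewrite Lv.
Qed.

End Clus.

Section Comb.
Local Open Scope classical_set_scope.
Local Open Scope ring_scope.
Variables (V E S : finType) (P : problem V E S) (R : realType).
Notation K := {set S + E}.

Definition srcs (T : K) : {set S} := finset (fun s => inl s \in T).

Definition rsb (T : K) : bool :=
  (#|srcs T| == 1%N) &&
  [forall e, (inr e \in T) ==> (in_edge P e :&: T != finset.set0)].

Lemma rsbP (T : K) : reflect (routing_subnetwork P T) (rsb T).
Proof.
apply: (iffP andP) => [[/eqP h1 /forallP h2]|[h1 h2]]; split => //.
- by move=> e eT; have := h2 e; rewrite eT.
- by apply/eqP.
- by apply/forallP => e; apply/implyP; exact: h2.
Qed.

Lemma nu_some (T : K) s : #|srcs T| = 1%N -> inl s \in T -> nu T = Some s.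
Proof.
move=> /eqP/cards1P [x hx] sT; unfold nu.
case: pickP => [s0 Hs0|H]; last by rewrite H in sT.
have : s0 \in srcs T by rewrite inE.
have : s \in srcs T by rewrite inE.
by rewrite hx !inE => /eqP -> /eqP ->.
Qed.

Lemma nu_src (T : K) s : nu T = Some s -> inl s \in T.
Proof. by unfold nu; case: pickP => // s0 H [<-]. Qed.

Lemma set1I_neq0 (x : S + E) (T : K) :
  (finset.set1 x :&: T != finset.set0) = (x \in T).
Proof.
apply/finset.set0Pn/idP => [[y]|xT]; first by rewrite inE => /andP[/set1P -> ].
by exists x; rewrite inE set11.
Qed.

Lemma atom1 (x : S + E) (T : K) :
  atom R T (finset.set1 x) = if x \in T then 1 else 0.
Proof. by rewrite /atom set1I_neq0. Qed.

Lemma setIU_neq0 (a b T : K) :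
  ((a :|: b) :&: T != finset.set0) = (a :&: T != finset.set0) || (b :&: T != finset.set0).
Proof. by rewrite finset.setIUl finset.setU_eq0 negb_and. Qed.

Lemma hmeet_atom (T : K) s b :
  hmeet (atom R T) (finset.set1 (inl s)) b =
  if (inl s \in T) && (b :&: T != finset.set0) then 1 else 0.
Proof.
rewrite /hmeet /atom setIU_neq0 set1I_neq0.
case: (inl s \in T); case: (b :&: T != finset.set0) => /=.
- by rewrite addrK.
- by rewrite addr0 subrr.
- by rewrite add0r subrr.
- by rewrite addr0 subrr.
Qed.

Section hsum.
Variables (n : nat) (Tf : 'I_n -> K) (c : 'I_n -> R).
Definition hsum : hfun E S R := fun b => \sum_i c i * atom R (Tf i) b.

Lemma hmeet_hsum a b : hmeet hsum a b = \sum_i c i * hmeet (atom R (Tf i)) a b.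
Proof.
rewrite /hmeet /hsum -big_split /= -sumrB; apply: eq_bigr => i _.
by rewrite mulrBr mulrDr.
Qed.

Lemma hcond_hsum a b : hcond hsum a b = \sum_i c i * hcond (atom R (Tf i)) a b.
Proof.
rewrite /hcond /hsum -sumrB; apply: eq_bigr => i _.
by rewrite mulrBr.
Qed.

Lemma proj_edge_hsum e : proj_edge hsum e = \sum_(i | inr e \in Tf i) c i.
Proof.
rewrite /proj_edge /hsum [RHS]big_mkcond /=; apply: eq_bigr => i _.
by rewrite atom1; case: ifP; rewrite ?mulr1 ?mulr0.
Qed.

Lemma hmeet_hsum_src s b : hmeet hsum (finset.set1 (inl s)) b =
  \sum_(i | (inl s \in Tf i) && (b :&: Tf i != finset.set0)) c i.
Proof.
rewrite hmeet_hsum [RHS]big_mkcond /=; apply: eq_bigr => i _.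
by rewrite hmeet_atom; case: ifP; rewrite ?mulr1 ?mulr0.
Qed.
End hsum.


Lemma sub_sum (I : finType) (P1 P2 : pred I) (F : I -> R) :
  (forall i, 0 <= F i) -> (forall i, P1 i -> 0 < F i -> P2 i) ->
  \sum_(i | P1 i) F i <= \sum_(i | P2 i) F i.
Proof.
move=> F0 h; rewrite [X in X <= _]big_mkcond [X in _ <= X]big_mkcond /=.
apply: ler_sum => i _.
case: (boolP (P1 i)) => p1; last by case: (P2 i).
have := F0 i; rewrite le_eqVlt => /orP[/eqP <-|Fp]; first by case: (P2 i).
by rewrite (h i p1 Fp).
Qed.

Lemma sum_atom_src (T : K) :
  \sum_s atom R T (finset.set1 (inl s)) = #|srcs T|%:R.
Proof.
rewrite (eq_bigr (fun s => if s \in srcs T then 1 else 0)); last first.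
  by move=> s _; rewrite atom1 inE.
by rewrite -big_mkcond /= sumr_const.
Qed.

Lemma atom_all_le (T : K) : atom R T (all_sources E S) <= #|srcs T|%:R.
Proof.
rewrite /atom; case: finset.set0Pn => [[x]|_]; last by rewrite ler0n.
rewrite inE => /andP[xa xT]; case: x xa xT => [s0|e0]; rewrite /all_sources inE //= => _ sT.
rewrite ler1n card_gt0; apply/finset.set0Pn; exists s0; by rewrite inE.
Qed.

Lemma atom_all_src (T : K) s : inl s \in T -> atom R T (all_sources E S) = 1.
Proof.
move=> sT; rewrite /atom; case: finset.set0Pn => // -[]; exists (inl s).
by rewrite inE sT andbT /all_sources inE.
Qed.

Lemma hcond_atom_ge0 (T a b : K) : 0 <= hcond (atom R T) a b.
Proof.
rewrite /hcond /atom setIU_neq0.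
by case: (a :&: T != finset.set0); case: (b :&: T != finset.set0) => /=;
  rewrite ?subrr ?subr0 ?ler01 ?lexx.
Qed.

Lemma fwd (lam : S -> R) (om : E -> R) :
  zero_achievable_routing P lam om -> CL (proj_AA_TI P (R:=R)) lam om.
Proof.
move=> [n [T [c [HT [Hc [He Hs]]]]]].
pose H := hsum T c.
have aaH : almost_atomic H.
  by exists n, c, (fun i => atom R (T i)); split => //; split => // i; exists (T i).
have CTH : C_T P H.
  move=> e; rewrite hcond_hsum; apply: big1 => i _.
  rewrite /hcond /atom setIU_neq0 set1I_neq0.
  case: (boolP (inr e \in T i)) => eT /=; last by rewrite subrr mulr0.
  by rewrite ((proj2 (HT i)) e eT) subrr mulr0.
have CIH : C_I H.
  rewrite /C_I /H /hsum exchange_big /=; apply: eq_bigr => i _.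
  rewrite -mulr_sumr sum_atom_src; congr (_ * _).
  have /eqP/cards1P [s0 hs0] := proj1 (HT i).
  have := set11 s0; rewrite -hs0 inE => /atom_all_src ->.
  by rewrite /srcs hs0 cards1.
exists (fun _ => proj_src P H), (fun _ => proj_edge H), (fun _ => 1).
split; first by move=> k; exists H.
split; first by move=> k; exact: ltr01.
split.
  move=> e; exists (proj_edge H e); split.
    rewrite (_ : (fun _ => _) = fun=> proj_edge H e); first exact: cvg_cst.
    by apply: boolp.funext => k; rewrite mul1r.
  by rewrite proj_edge_hsum; exact: He.
move=> s; exists (proj_src P H s); split.
  rewrite (_ : (fun _ => _) = fun=> proj_src P H s); first exact: cvg_cst.
  by apply: boolp.funext => k; rewrite mul1e.
rewrite /proj_src; apply: le_bigmin => [|u uD]; first by rewrite leey.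
rewrite lee_fin hmeet_hsum_src; apply: le_trans (Hs s u uD) _.
apply: sub_sum => // i /andP[uT /eqP /nu_src sT] _.
by rewrite sT uT.
Qed.


Definition Qe (e : E) (T : K) := rsb T && (inr e \in T).
Definition Qsu (s : S) (u : V) (T : K) :=
  (rsb T && (in_node P u :&: T != finset.set0)) && (nu T == Some s).

Lemma decomp (lamv : S -> \bar R) (omv : E -> R) :
  proj_AA_TI P lamv omv ->
  exists x : K -> R, (forall T, 0 <= x T) /\
    (forall e, \sum_(T | Qe e T) x T <= omv e) /\
    (forall s u, u \in D P s -> (lamv s <= (\sum_(T | Qsu s u T) x T)%:E)%E).
Proof.
move=> [h [[n [c [g [c0 [ga hg]]]]] [CT [CI [-> ->]]]]].
have [Tf HTf] := boolp.choice ga.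
have hE : h = hsum Tf c.
  by apply: boolp.funext => b; rewrite hg /hsum; apply: eq_bigr => i _; rewrite HTf.
rewrite hE in CT CI *.
have clo i : 0 < c i -> forall e, inr e \in Tf i -> in_edge P e :&: Tf i != finset.set0.
  move=> ci e eT; have := CT e; rewrite hcond_hsum => /psumr_eq0P H0.
  have /(_ i isT)/eqP := H0 (fun j _ => mulr_ge0 (c0 j) (hcond_atom_ge0 _ _ _)).
  rewrite mulf_eq0 (gt_eqF ci) /= /hcond /atom setIU_neq0 set1I_neq0 eT /=.
  by case: ifP => //; rewrite subr0 oner_eq0.
have src1 i s : 0 < c i -> inl s \in Tf i -> #|srcs (Tf i)| = 1%N.
  move=> ci sT.
  have H0 : \sum_i (c i * (#|srcs (Tf i)|%:R - atom R (Tf i) (all_sources E S))) = 0.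
    move: CI; rewrite /C_I /hsum exchange_big /= => CI'.
    under eq_bigr do rewrite mulrBr -sum_atom_src mulr_sumr.
    by rewrite sumrB -CI' subrr.
  have nn : forall j, true -> 0 <= c j * (#|srcs (Tf j)|%:R - atom R (Tf j) (all_sources E S)).
    by move=> j _; rewrite mulr_ge0 // subr_ge0 atom_all_le.
  have /eqP := @psumr_eq0P _ _ _ _ nn H0 i isT.
  rewrite mulf_eq0 (gt_eqF ci) /= (atom_all_src sT) subr_eq0.
  by rewrite -[1]/(1%:R) eqr_nat => /eqP.
pose x T := \sum_(i | Tf i == T) c i.
have regroup (Q : pred K) : \sum_(T | Q T) x T = \sum_(i | Q (Tf i)) c i.
  rewrite (partition_big Tf Q) //=; apply: eq_bigr => T QT; apply: eq_bigl => i.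
  by case: (eqVneq (Tf i) T) => [->|]; rewrite ?QT ?andbF ?andbT.
exists x; split; first by move=> T; apply: sumr_ge0 => i _.
split.
  move=> e; rewrite regroup proj_edge_hsum; apply: sub_sum => // i.
  by case/andP.
move=> s u uD; rewrite regroup.
apply: le_trans (bigmin_le_cond _ _ uD) _.
rewrite lee_fin hmeet_hsum_src; apply: sub_sum => // i /andP[sT uT] ci.
rewrite /Qsu uT (nu_some (src1 _ _ ci sT) sT) eqxx andbT /=.
rewrite andbT; apply/andP; split; first by apply/eqP; exact: (src1 _ _ ci sT).
by apply/forallP => e; apply/implyP; exact: clo.
Qed.


Lemma sum_min (I : finType) (Q : pred I) (a : I -> R) (B : R) :
  0 <= B -> (forall i, 0 <= a i) ->
  Num.min (\sum_(i | Q i) a i) B <= \sum_(i | Q i) Num.min (a i) B.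
Proof.
move=> B0 a0.
pose Kp (y1 y2 : R) := 0 <= y1 /\ 0 <= y2 /\ Num.min y1 B <= y2.
suff : Kp (\sum_(i | Q i) a i) (\sum_(i | Q i) Num.min (a i) B) by case=> _ [].
apply: (big_rec2 Kp).
  by split; rewrite ?lexx //; split; rewrite ?lexx // ge_min lexx.
move=> i y1 y2 _ [h1 [h2 h3]]; split; first by rewrite addr_ge0.
split; first by rewrite addr_ge0 // le_min a0 B0.
case: (leP (a i) B) => aB.
  rewrite ge_min; apply/orP.
  move: h3; case: (leP y1 B) => y1B h.
    by left; rewrite lerD2l.
  by right; rewrite -[B]add0r lerD.
by rewrite ge_min; apply/orP; right; rewrite lerDl.
Qed.

Lemma rev (lam : S -> R) (om : E -> R) (hlam : forall s, 0 <= lam s) :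
  CL (proj_AA_TI P (R:=R)) lam om -> zero_achievable_routing P lam om.
Proof.
move=> [lamn [omn [cc [Hset [cpos [Hedge Hsrc]]]]]].
have [xf Hx] := boolp.choice (fun n => decomp (Hset n)).
pose B := 1 + \sum_s lam s.
have B0 : 0 <= B by rewrite addr_ge0 ?ler01 // sumr_ge0.
have lamB s : lam s <= B.
  apply: le_trans (_ : lam s <= \sum_s lam s) _.
    by rewrite (bigD1 s) //= lerDl sumr_ge0.
  by rewrite lerDr ler01.
pose y n T := Num.min (cc n * xf n T) B.
have hy n T : 0 <= y n T <= B.
  rewrite le_min ge_min lexx orbT andbT B0 andbT mulr_ge0 //; first exact: ltW.
  exact: (Hx n).1.
have [p [p0 Hp]] := cluster_lem hy.
exists #|rsb|, (fun i => enum_val i), (fun i => p (enum_val i)).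
split; first by move=> i; apply/rsbP; have := enum_valP i.
split; first by move=> i; exact: p0.
split.
  move=> e.
  rewrite -(@big_enum_val_cond _ (@GRing.add R) 0 _ rsb (fun T => inr e \in T) p).
  rewrite (eq_bigl (Qe e)) //.
  apply: (proj1 (Hp _ _)) => eps eps0.
  have [l [Hl lom]] := Hedge e.
  have hn0 : nbhs l [set x | x < l + eps].
    apply: open_nbhs_nbhs; split; first exact: open_lt.
    by rewrite /= ltrDl.
  have := Hl _ hn0.
  apply: (@filterS nat \oo) => n /= hn.
  apply: le_trans (_ : _ <= cc n * \sum_(T | Qe e T) xf n T) _.
    by rewrite mulr_sumr; apply: ler_sum => T _; rewrite ge_min lexx.
  apply: le_trans (_ : _ <= cc n * omn n e) _.
    by rewrite ler_wpM2l ?(ltW (cpos n)) //; exact: (Hx n).2.1 e.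
  by apply: le_trans (ltW hn) _; rewrite lerD2r.
move=> s u uD.
rewrite -(@big_enum_val_cond _ (@GRing.add R) 0 _ rsb
  (fun T => (in_node P u :&: T != finset.set0) && (nu T == Some s)) p).
rewrite (eq_bigl (Qsu s u)); last by move=> T; rewrite /Qsu andbA.
apply: (proj2 (Hp _ _)) => eps eps0.
have [l [Hl laml]] := Hsrc s.
have hn0 : nbhs l [set x | ((lam s - eps)%:E < x)%E].
  apply: open_nbhs_nbhs; split; first exact: open_ereal_gt_ereal.
  by apply: lt_le_trans laml; rewrite /= lte_fin gtrBl.
have := Hl _ hn0.
apply: (@filterS nat \oo) => n /= hn.
have h1 : lam s - eps < cc n * \sum_(T | Qsu s u T) xf n T.
  rewrite -lte_fin; apply: lt_le_trans hn _; rewrite EFinM.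
  apply: lee_wpmul2l; first by rewrite lee_fin ltW.
  exact: (Hx n).2.2 s u uD.
apply: le_trans (_ : _ <= Num.min (\sum_(T | Qsu s u T) cc n * xf n T) B) _.
  rewrite le_min -mulr_sumr (ltW h1) /=.
  by apply: le_trans (lamB s); rewrite gerBl ltW.
apply: sum_min => // T; apply: mulr_ge0; [exact: ltW | exact: (Hx n).1].
Qed.

End Comb.

Unset Implicit Arguments.

Theorem theorem6 (R : realType) (V E S : finType) (P : problem V E S)
    (hacyc : acyclic P) (lam : S -> R) (om : E -> R)
    (hlam : forall s, 0 <= lam s) (hom : forall e, 0 <= om e) :
  zero_achievable_routing P lam om <-> CL (proj_AA_TI P (R:=R)) lam om.
Proof.
split; [exact: fwd | exact: rev].
Qed.
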